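(* Let $\mathcal T$ consist of projective objects and be contravariantly finite in $\mathcal A$, and let $f:X\to Y$ be an epimorphism in $\mathcal A$. Then $\overline f$ is a strong monomorphism in the left triangulated category $\underline{\mathcal A}$ if and only if $\ker(f)\in\mathcal T$.
   Context: $\mathcal A$ is abelian, $\mathcal T$ a full additive subcategory closed under finite direct sums and direct summands; $\underline{\mathcal A}=\mathcal A/\langle\mathcal T\rangle$ is the stable category, $\overline f$ the class of $f$. For $\mathcal T$ contravariantly finite, $\underline{\mathcal A}$ is left triangulated: $\Omega Y=\ker(p_Y)$ for a $\mathcal T$-precover $p_Y:T_Y\to Y$; for $f:X\to Y$ one forms the pullback $Z$ of $f$ and $p_Y$ with projection $g:Z\to X$ and induced $\Omega Y\to Z$; left triangles are diagrams isomorphic to $\Omega Y\to Z\xrightarrow{\overline g}X\xrightarrow{\overline f}Y$. $\overline f$ is a strong monomorphism if there is a left triangle $\Omega Y\to0\to X\xrightarrow{\overline f}Y$. *)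

(* Defs.v *)
From HB Require Import structures.
From mathcomp Require Import all_boot all_algebra.
Set Implicit Arguments. Unset Strict Implicit. Unset Printing Implicit Defensive.
Import GRing.Theory.
Local Open Scope ring_scope.

Record preadditive := PreAdditive {
  Obj : Type;
  Mor : Obj -> Obj -> zmodType;
  idm : forall X, Mor X X;
  comp : forall {X Y Z}, Mor Y Z -> Mor X Y -> Mor X Z;
  compA : forall X Y Z W (h : Mor Z W) (g : Mor Y Z) (f : Mor X Y),
      comp h (comp g f) = comp (comp h g) f;
  comp1m : forall X Y (f : Mor X Y), comp (idm Y) f = f;
  compm1 : forall X Y (f : Mor X Y), comp f (idm X) = f;
  compDl : forall X Y Z (g g' : Mor Y Z) (f : Mor X Y),
      comp (g + g') f = comp g f + comp g' f;
  compDr : forall X Y Z (g : Mor Y Z) (f f' : Mor X Y),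
      comp g (f + f') = comp g f + comp g f'
}.
Arguments idm {p} X.
Arguments comp {p X Y Z}.
Arguments Mor {p}.
Arguments Obj : clear implicits.

Section Cat.
Variable C : preadditive.
Implicit Types X Y Z W A B K Q O U V S P Cc Ca Cb : Obj C.

Definition is_zero_obj (O : Obj C) : Prop :=
  (forall W (h : Mor O W), h = 0) /\ (forall W (h : Mor W O), h = 0).

Definition mono X Y (f : Mor X Y) : Prop :=
  forall W (g1 g2 : Mor W X), comp f g1 = comp f g2 -> g1 = g2.

Definition epi X Y (f : Mor X Y) : Prop :=
  forall W (g1 g2 : Mor Y W), comp g1 f = comp g2 f -> g1 = g2.

Definition is_kernel X Y K (f : Mor X Y) (k : Mor K X) : Prop :=
  comp f k = 0 /\
  forall W (g : Mor W X), comp f g = 0 -> exists! h : Mor W K, comp k h = g.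

Definition is_cokernel X Y Q (f : Mor X Y) (q : Mor Y Q) : Prop :=
  comp q f = 0 /\
  forall W (g : Mor Y W), comp g f = 0 -> exists! h : Mor Q W, comp h q = g.

Definition is_biproduct A B S (i1 : Mor A S) (i2 : Mor B S)
    (p1 : Mor S A) (p2 : Mor S B) : Prop :=
  [/\ comp p1 i1 = idm A, comp p2 i2 = idm B, comp p1 i2 = 0, comp p2 i1 = 0
    & comp i1 p1 + comp i2 p2 = idm S].

Definition abelian : Prop :=
  (exists O, is_zero_obj O) /\
  (forall A B, exists S (i1 : Mor A S) (i2 : Mor B S) p1 p2,
      is_biproduct i1 i2 p1 p2) /\
  (forall X Y (f : Mor X Y), exists K (k : Mor K X), is_kernel f k) /\
  (forall X Y (f : Mor X Y), exists Q (q : Mor Y Q), is_cokernel f q) /\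
  (forall X Y (f : Mor X Y), mono f -> exists Q (q : Mor Y Q), is_kernel q f) /\
  (forall X Y (f : Mor X Y), epi f -> exists K (k : Mor K X), is_cokernel k f).

Definition is_pullback X Y U Z (f : Mor X Y) (p : Mor U Y)
    (g : Mor Z X) (t : Mor Z U) : Prop :=
  comp f g = comp p t /\
  forall W (a : Mor W X) (b : Mor W U), comp f a = comp p b ->
    exists! h : Mor W Z, comp g h = a /\ comp t h = b.

Definition projective (P : Obj C) : Prop :=
  forall A B (e : Mor A B) (g : Mor P B), epi e -> exists h, comp e h = g.

Section Sub.
(* a full subcategory is given by its class of objects *)
Variable T : Obj C -> Prop.

Definition additive_closed : Prop :=
  [/\ forall O, is_zero_obj O -> T O,
      forall A B S (i1 : Mor A S) (i2 : Mor B S) p1 p2,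
        is_biproduct i1 i2 p1 p2 -> T A -> T B -> T S
    & forall X U (s : Mor X U) (r : Mor U X), comp r s = idm X -> T U -> T X].

Definition factors_through_T X Y (f : Mor X Y) : Prop :=
  exists U (a : Mor X U) (b : Mor U Y), T U /\ f = comp b a.

(* equality in the stable category A / <T> *)
Definition stable_eq X Y (f g : Mor X Y) : Prop := factors_through_T (f - g).

Definition stable_iso X Y (f : Mor X Y) : Prop :=
  exists g : Mor Y X, stable_eq (comp g f) (idm X) /\ stable_eq (comp f g) (idm Y).

Definition is_precover U Y (p : Mor U Y) : Prop :=
  T U /\ forall V (h : Mor V Y), T V -> exists h' : Mor V U, comp p h' = h.

Definition contravariantly_finite : Prop :=
  forall Y, exists U (p : Mor U Y), is_precover p.

(* A fixed choice of T-precovers p_Y : T_Y -> Y and of kernels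
   Omega Y -> T_Y of them, defining the loop functor Omega. *)
Record loop_data := LoopData {
  TC : Obj C -> Obj C;
  pc : forall Y, Mor (TC Y) Y;
  OM : Obj C -> Obj C;
  ok : forall Y, Mor (OM Y) (TC Y);
  pc_precover : forall Y, is_precover (pc Y);
  ok_kernel : forall Y, is_kernel (pc Y) (ok Y)
}.

Variable D : loop_data.

(* standard left triangle  Omega Y --w--> Z --g--> X --f--> Y  *)
Definition is_standard_triangle X Y (f : Mor X Y) Z
    (w : Mor (OM D Y) Z) (g : Mor Z X) : Prop :=
  exists t : Mor Z (TC D Y),
    [/\ is_pullback f (pc D Y) g t, comp g w = 0 & comp t w = ok D Y].

(* om : Omega Ca -> Omega Cb represents Omega(c) for c : Ca -> Cb *)
Definition is_omega_lift Ca Cb (c : Mor Ca Cb) (om : Mor (OM D Ca) (OM D Cb)) : Prop :=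
  exists s : Mor (TC D Ca) (TC D Cb),
    comp (pc D Cb) s = comp c (pc D Ca) /\ comp (ok D Cb) om = comp s (ok D Ca).

(* Omega C --h--> A --g--> B --f--> C is a left triangle in the stable
   category: isomorphic (via (Omega c, a, b, c) with a, b, c stable isos,
   squares commuting in the stable category) to a standard left triangle. *)
Definition is_left_triangle A B Cc (h : Mor (OM D Cc) A) (g : Mor A B)
    (f : Mor B Cc) : Prop :=
  exists (X' Y' : Obj C) (f' : Mor X' Y') Z (w : Mor (OM D Y') Z) (g' : Mor Z X'),
    is_standard_triangle f' w g' /\
    exists (a : Mor A Z) (b : Mor B X') (c : Mor Cc Y') (om : Mor (OM D Cc) (OM D Y')),
      [/\ stable_iso a, stable_iso b, stable_iso c & is_omega_lift c om] /\
      [/\ stable_eq (comp c f) (comp f' b),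
          stable_eq (comp b g) (comp g' a)
        & stable_eq (comp a h) (comp w om)].

(* f-bar is a strong monomorphism: Omega Y -> 0 -> X --f--> Y is a left triangle *)
Definition strong_mono X Y (f : Mor X Y) : Prop :=
  exists O, is_zero_obj O /\
    is_left_triangle (0 : Mor (OM D Y) O) (0 : Mor O X) f.

End Sub.
End Cat.

(* Main.v *)
Require Import Defs.
From mathcomp Require Import all_boot all_algebra.
Set Implicit Arguments. Unset Strict Implicit. Unset Printing Implicit Defensive.
Import GRing.Theory.
Local Open Scope ring_scope.

Notation "g ⊚ f" := (Defs.comp g f) (at level 40, left associativity).

Lemma comp0l (C : preadditive) (X Y Z : Obj C) (f : Mor X Y) :
  (0 : Mor Y Z) ⊚ f = 0.
Proof.
have H := compDl (0 : Mor Y Z) 0 f. rewrite addr0 in H.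
by apply: (addrI ((0 : Mor Y Z) ⊚ f)); rewrite addr0 -H.
Qed.

Lemma comp0r (C : preadditive) (X Y Z : Obj C) (g : Mor Y Z) :
  g ⊚ (0 : Mor X Y) = 0.
Proof.
have H := compDr g (0 : Mor X Y) 0. rewrite addr0 in H.
by apply: (addrI (g ⊚ (0 : Mor X Y))); rewrite addr0 -H.
Qed.

Lemma compNl (C : preadditive) (X Y Z : Obj C) (g : Mor Y Z) (f : Mor X Y) :
  (- g) ⊚ f = - (g ⊚ f).
Proof.
apply/eqP; rewrite -subr_eq0 opprK addrC -compDl addrN comp0l //.
Qed.

Lemma compNr (C : preadditive) (X Y Z : Obj C) (g : Mor Y Z) (f : Mor X Y) :
  g ⊚ (- f) = - (g ⊚ f).
Proof.
apply/eqP; rewrite -subr_eq0 opprK addrC -compDr addrN comp0r //.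
Qed.

Lemma compBl (C : preadditive) (X Y Z : Obj C) (g g' : Mor Y Z) (f : Mor X Y) :
  (g - g') ⊚ f = g ⊚ f - g' ⊚ f.
Proof. by rewrite compDl compNl. Qed.

Lemma compBr (C : preadditive) (X Y Z : Obj C) (g : Mor Y Z) (f f' : Mor X Y) :
  g ⊚ (f - f') = g ⊚ f - g ⊚ f'.
Proof. by rewrite compDr compNr. Qed.

Lemma ker_mono (C : preadditive) (X Y K : Obj C) (f : Mor X Y) (k : Mor K X) :
  is_kernel f k -> forall W (u1 u2 : Mor W K), k ⊚ u1 = k ⊚ u2 -> u1 = u2.
Proof.
move=> [fk0 H] W u1 u2 e.
have [|h [_ U]] := H W (k ⊚ u1); first by rewrite Defs.compA fk0 comp0l.
by rewrite -(U u1 erefl) (U u2 (esym e)).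
Qed.

Lemma ker_lift (C : preadditive) (X Y K W : Obj C) (f : Mor X Y) (k : Mor K X)
  (g : Mor W X) : is_kernel f k -> f ⊚ g = 0 -> exists h, k ⊚ h = g.
Proof. by move=> [_ H] /H [h [e _]]; exists h. Qed.

Lemma ker_comp (C : preadditive) (X Y K : Obj C) (f : Mor X Y) (k : Mor K X) :
  is_kernel f k -> f ⊚ k = 0.
Proof. by case. Qed.

Lemma pb_lift (C : preadditive) (X Y U Z W : Obj C) (f : Mor X Y) (p : Mor U Y)
  (g : Mor Z X) (t : Mor Z U) (a : Mor W X) (b : Mor W U) :
  is_pullback f p g t -> f ⊚ a = p ⊚ b -> exists h, g ⊚ h = a /\ t ⊚ h = b.
Proof. by move=> [_ H] /H [h [e _]]; exists h. Qed.

Lemma pb_uniq (C : preadditive) (X Y U Z W : Obj C) (f : Mor X Y) (p : Mor U Y)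
  (g : Mor Z X) (t : Mor Z U) (u1 u2 : Mor W Z) :
  is_pullback f p g t -> g ⊚ u1 = g ⊚ u2 -> t ⊚ u1 = t ⊚ u2 -> u1 = u2.
Proof.
move=> [fg H] e1 e2.
have [|h [_ U']] := H W (g ⊚ u1) (t ⊚ u1); first by rewrite !Defs.compA fg.
by rewrite -(U' u1 (conj erefl erefl)) (U' u2 (conj (esym e1) (esym e2))).
Qed.

Section FTsec.
End FTsec.

Lemma FT_through (C : preadditive) (T : Obj C -> Prop) (X U Y : Obj C)
  (a : Mor X U) (b : Mor U Y) : T U -> factors_through_T T (b ⊚ a).
Proof. by move=> TU; exists U, a, b. Qed.

Lemma FT_compl (C : preadditive) (T : Obj C -> Prop) (X Y Z : Obj C)
  (u : Mor X Y) (v : Mor Y Z) :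
  factors_through_T T u -> factors_through_T T (v ⊚ u).
Proof. by move=> [U [a [b [TU ->]]]]; exists U, a, (v ⊚ b); rewrite Defs.compA. Qed.

Lemma FT_compr (C : preadditive) (T : Obj C -> Prop) (W X Y : Obj C)
  (u : Mor X Y) (v : Mor W X) :
  factors_through_T T u -> factors_through_T T (u ⊚ v).
Proof. by move=> [U [a [b [TU ->]]]]; exists U, (a ⊚ v), b; rewrite Defs.compA. Qed.

Lemma FTN (C : preadditive) (T : Obj C -> Prop) (X Y : Obj C) (u : Mor X Y) :
  factors_through_T T u -> factors_through_T T (- u).
Proof. by move=> [U [a [b [TU ->]]]]; exists U, a, (- b); rewrite compNl. Qed.

Lemma FT0 (C : preadditive) (T : Obj C -> Prop) (X Y : Obj C) :
  abelian C -> additive_closed T -> factors_through_T T (0 : Mor X Y).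
Proof.
move=> [[O hO] _] [h0 _ _].
by exists O, 0, 0; split; [apply: h0|rewrite comp0l].
Qed.

Lemma FTD (C : preadditive) (T : Obj C -> Prop) (X Y : Obj C) (u v : Mor X Y) :
  abelian C -> additive_closed T ->
  factors_through_T T u -> factors_through_T T v -> factors_through_T T (u + v).
Proof.
move=> [_ [hB _]] [_ hS _] [U1 [a1 [b1 [T1 ->]]]] [U2 [a2 [b2 [T2 ->]]]].
have [S [i1 [i2 [p1 [p2 hb]]]]] := hB U1 U2.
case: (hb) => e11 e22 e12 e21 _.
exists S, (i1 ⊚ a1 + i2 ⊚ a2), (b1 ⊚ p1 + b2 ⊚ p2); split; first exact: hS hb T1 T2.
rewrite !compDr !compDl -!Defs.compA !(Defs.compA p1) !(Defs.compA p2) e11 e22 e12 e21.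
by rewrite !comp0l !comp0r addr0 add0r !comp1m.
Qed.

Lemma FTB (C : preadditive) (T : Obj C -> Prop) (X Y : Obj C) (u v : Mor X Y) :
  abelian C -> additive_closed T ->
  factors_through_T T u -> factors_through_T T v -> factors_through_T T (u - v).
Proof. by move=> hA hT hu hv; apply: FTD => //; apply: FTN. Qed.

Lemma FT_id (C : preadditive) (T : Obj C -> Prop) (X : Obj C) :
  additive_closed T -> factors_through_T T (idm X) -> T X.
Proof. by move=> [_ _ hR] [U [a [b [TU e]]]]; apply: (hR X U a b). Qed.

Lemma FT_eq (C : preadditive) (T : Obj C -> Prop) (X Y : Obj C) (u v : Mor X Y) :
  u = v -> factors_through_T T u -> factors_through_T T v.
Proof. by move=> ->. Qed.

Lemma TC_T (C : preadditive) (T : Obj C -> Prop) (D : loop_data T) (Y : Obj C) :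
  T (TC D Y).
Proof. by case: (pc_precover D Y). Qed.

Lemma pc_lift (C : preadditive) (T : Obj C -> Prop) (D : loop_data T) (Y V : Obj C)
  (h : Mor V Y) : T V -> exists h', pc D Y ⊚ h' = h.
Proof. by case: (pc_precover D Y) => _ H /(H V h). Qed.

Lemma om_exists (C : preadditive) (T : Obj C -> Prop) (D : loop_data T)
  (Ca Cb : Obj C) (c : Mor Ca Cb) : exists om, @is_omega_lift C T D _ _ c om.
Proof.
have [s hs] := pc_lift D (c ⊚ pc D Ca) (TC_T D Ca).
have [|om hom] := ker_lift (g := s ⊚ ok D Ca) (ok_kernel D Cb).
  by rewrite Defs.compA hs -Defs.compA (ker_comp (ok_kernel D Ca)) comp0r.
by exists om, s.
Qed.

Lemma om_comp (C : preadditive) (T : Obj C -> Prop) (D : loop_data T)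
  (Ca Cb Cc : Obj C) (c1 : Mor Ca Cb) (c2 : Mor Cb Cc) om1 om2 :
  @is_omega_lift C T D _ _ c1 om1 -> @is_omega_lift C T D _ _ c2 om2 ->
  @is_omega_lift C T D _ _ (c2 ⊚ c1) (om2 ⊚ om1).
Proof.
move=> [s1 [h1 k1]] [s2 [h2 k2]]; exists (s2 ⊚ s1); split.
  by rewrite Defs.compA h2 -Defs.compA h1 Defs.compA.
by rewrite Defs.compA k2 -Defs.compA k1 Defs.compA.
Qed.

Lemma om_sub (C : preadditive) (T : Obj C -> Prop) (D : loop_data T)
  (Ca Cb : Obj C) (c1 c2 : Mor Ca Cb) om1 om2 :
  @is_omega_lift C T D _ _ c1 om1 -> @is_omega_lift C T D _ _ c2 om2 ->
  @is_omega_lift C T D _ _ (c1 - c2) (om1 - om2).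
Proof.
move=> [s1 [h1 k1]] [s2 [h2 k2]]; exists (s1 - s2); split.
  by rewrite compBr compBl h1 h2.
by rewrite compBr compBl k1 k2.
Qed.

Lemma om_id (C : preadditive) (T : Obj C -> Prop) (D : loop_data T) (X : Obj C) :
  @is_omega_lift C T D _ _ (idm X) (idm (OM D X)).
Proof. by exists (idm _); rewrite !comp1m !compm1. Qed.

Lemma om_FT (C : preadditive) (T : Obj C -> Prop) (D : loop_data T)
  (Ca Cb : Obj C) (c : Mor Ca Cb) om :
  factors_through_T T c -> @is_omega_lift C T D _ _ c om ->
  factors_through_T T om.
Proof.
move=> [V [al [be [TV ec]]]] [s [hs ks]].
have [be' hb] := pc_lift D be TV.
have [|y hy] := ker_lift (g := s - be' ⊚ (al ⊚ pc D Ca)) (ok_kernel D Cb).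
  by rewrite compBr hs ec !Defs.compA hb subrr.
have -> : om = y ⊚ ok D Ca.
  apply: (ker_mono (ok_kernel D Cb)).
  rewrite ks Defs.compA hy compBl -!Defs.compA (ker_comp (ok_kernel D Ca)).
  by rewrite !comp0r subr0.
by apply: FT_through; apply: TC_T D Ca.
Qed.

Lemma telesc (V : zmodType) (a b c d : V) : a - b + (b - c) + (c - d) = a - d.
Proof. by rewrite !addrA !subrK. Qed.

Lemma forward (C : preadditive) (T : Obj C -> Prop) (D : loop_data T) :
  abelian C -> additive_closed T -> (forall U, T U -> projective U) ->
  forall (X Y : Obj C) (f : Mor X Y), epi f ->
  forall K (k : Mor K X), is_kernel f k -> strong_mono D f -> T K.
Proof.
move=> hA hT hP X Y f epif K k hk.
move=> [O [hO [X' [Y' [f' [Z' [w' [g' [STD [a [b [c [om [[ia ib ic hom] [hsq _ _]]]]]]]]]]]]]]].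
case: STD => t' [hpb hgw htw].
case: ia => a2 [_ ha]; case: ib => b' [hb1 hb2]; case: ic => c' [hc1 hc2].
have TZ' : T Z'.
  apply: (FT_id hT); apply: (FT_eq _ (FTN ha)).
  by rewrite (proj1 hO _ a) comp0l sub0r opprK.
have FTk : factors_through_T T k.
  have [V [al [be [TV e1]]]] := FT_compr k hsq.
  have [be' hbe] := pc_lift D be TV.
  have [|h [hh _]] := pb_lift (a := b ⊚ k) (b := - (be' ⊚ al)) hpb.
    rewrite compNr !Defs.compA hbe -e1 compBl opprB.
    by rewrite -(Defs.compA c) (ker_comp hk) comp0r subr0.
  have FTbk : factors_through_T T (b ⊚ k) by rewrite -hh; exact: FT_through.
  apply: (FT_eq _ (FTB hA hT (FT_compl b' FTbk) (FT_compr k hb1))).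
  by rewrite compBl comp1m Defs.compA opprB addrC subrK.
have [V [m0 [n0 [TV ek]]]] := FTk.
have [nu hnu] := pc_lift D (f ⊚ n0) TV.
have [|e he] := ker_lift (g := nu ⊚ m0) (ok_kernel D Y).
  by rewrite Defs.compA hnu -Defs.compA -ek (ker_comp hk).
have [q hq] := hP _ (TC_T D Y) X Y f (pc D Y) epif.
have [|dd hdd] := ker_lift (g := q ⊚ ok D Y) hk.
  by rewrite Defs.compA hq (ker_comp (ok_kernel D Y)).
have [|rho hrho] := ker_lift (g := n0 - q ⊚ nu) hk.
  by rewrite compBr Defs.compA hq hnu subrr.
have hid : idm K = dd ⊚ e + rho ⊚ m0.
  apply: (ker_mono hk); rewrite compm1 compDr !Defs.compA hdd hrho.
  rewrite -(Defs.compA q) he compBl Defs.compA -ek.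
  by rewrite addrC subrK.
set E := om ⊚ e.
have [|al [hal1 hal2]] := pb_lift (a := (0 : Mor K X')) (b := ok D Y' ⊚ E) hpb.
  by rewrite comp0r Defs.compA (ker_comp (ok_kernel D Y')) comp0l.
have [a' ha'] := pc_lift D g' TZ'.
have [|x hx] := ker_lift (g := a' ⊚ al) (ok_kernel D X').
  by rewrite Defs.compA ha' hal1.
have [Of' hOf'] := om_exists D f'.
have [sf' [hsf1 hsf2]] := hOf'.
have [|y hy] := ker_lift (g := t' - sf' ⊚ a') (ok_kernel D Y').
  by rewrite compBr -(proj1 hpb) Defs.compA hsf1 -Defs.compA ha' subrr.
have FT3 : factors_through_T T (E - Of' ⊚ x).
  have -> : E - Of' ⊚ x = y ⊚ al.
    apply: (ker_mono (ok_kernel D Y')).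
    rewrite compBr (Defs.compA _ y) hy compBl -hal2 (Defs.compA _ Of') hsf2.
    by rewrite -(Defs.compA sf') hx !Defs.compA.
  exact: FT_through.
have [om' hom'] := om_exists D c'.
have [Of hOf] := om_exists D f.
have [Ob' hOb'] := om_exists D b'.
have F4a : factors_through_T T (om' ⊚ om - idm (OM D Y)).
  apply: (om_FT hc1); apply: om_sub; [exact: om_comp hom hom' | exact: om_id].
have Fcf : factors_through_T T (c' ⊚ f' - f ⊚ b').
  apply: (FT_eq _ (FTD hA hT (FTD hA hT (FT_compl (c' ⊚ f') (FTN hb2))
     (FT_compr b' (FT_compl c' (FTN hsq)))) (FT_compr b' (FT_compr f hc1)))).
  rewrite !compNr !compBr !compBl !opprB !compBl !comp1m !compm1 !Defs.compA.
  by rewrite telesc.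
have F4 : factors_through_T T (e - Of ⊚ (Ob' ⊚ x)).
  have L := om_sub (om_comp hOf' hom') (om_comp hOb' hOf).
  have F5 := FT_compr x (om_FT Fcf L).
  have F6 := FT_compl om' FT3.
  have F7 := FT_compr e F4a.
  apply: (FT_eq _ (FTD hA hT (FTD hA hT (FTN F7) F6) F5)).
  rewrite /E !compBr !compBl !comp1m opprB !Defs.compA.
  by rewrite telesc.
have [sf [hsf1' hsf2']] := hOf.
have [|ze hze] := ker_lift (g := q ⊚ sf - pc D X) hk.
  by rewrite compBr Defs.compA hq hsf1' subrr.
have F8 : factors_through_T T (dd ⊚ Of).
  have -> : dd ⊚ Of = ze ⊚ ok D X.
    apply: (ker_mono hk); rewrite !Defs.compA hdd hze -Defs.compA hsf2' compBl.
    by rewrite (ker_comp (ok_kernel D X)) subr0 Defs.compA.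
  exact: FT_through (TC_T D X).
apply: (FT_id hT); rewrite hid.
apply: FTD => //; last exact: FT_through.
have -> : dd ⊚ e = dd ⊚ (e - Of ⊚ (Ob' ⊚ x)) + dd ⊚ Of ⊚ (Ob' ⊚ x).
  by rewrite compBr !Defs.compA subrK.
exact: FTD hA hT (FT_compl dd F4) (FT_compr _ F8).
Qed.

Lemma FT_to (C : preadditive) (T : Obj C -> Prop) (X U : Obj C) (u : Mor X U) :
  T U -> factors_through_T T u.
Proof. by move=> TU; rewrite -[u]comp1m; exact: FT_through. Qed.

Lemma pb_exists (C : preadditive) (X Y U : Obj C) (f : Mor X Y) (p : Mor U Y) :
  abelian C -> exists Z (g : Mor Z X) (t : Mor Z U), is_pullback f p g t.
Proof.
move=> [_ [hB [hK _]]].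
have [S [i1 [i2 [p1 [p2 hb]]]]] := hB X U.
case: (hb) => e11 e22 e12 e21 eid.
have [Z [z hz]] := hK _ _ (f ⊚ p1 - p ⊚ p2).
have hz0 := ker_comp hz.
exists Z, (p1 ⊚ z), (p2 ⊚ z); split.
  by apply/eqP; rewrite -subr_eq0 !Defs.compA -compBl hz0.
move=> W a b hab.
have [|h hh] := ker_lift (g := i1 ⊚ a + i2 ⊚ b) hz.
  rewrite compDr !compBl -!Defs.compA !(Defs.compA p1) !(Defs.compA p2).
  by rewrite e11 e22 e12 e21 !comp0l !comp1m !comp0r subr0 sub0r hab subrr.
have key : forall h' : Mor W Z, (p1 ⊚ z) ⊚ h' = a /\ (p2 ⊚ z) ⊚ h' = b ->
    z ⊚ h' = i1 ⊚ a + i2 ⊚ b.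
  by move=> h' [<- <-]; rewrite !Defs.compA -!compDl eid comp1m.
exists h; split.
  by rewrite -!Defs.compA hh !compDr !Defs.compA e11 e22 e12 e21 !comp0l !comp1m addr0 add0r.
by move=> h' /key; rewrite -hh => /(ker_mono hz) ->.
Qed.

Lemma backward (C : preadditive) (T : Obj C -> Prop) (D : loop_data T) :
  abelian C -> additive_closed T -> (forall U, T U -> projective U) ->
  forall (X Y : Obj C) (f : Mor X Y), epi f ->
  forall K (k : Mor K X), is_kernel f k -> T K -> strong_mono D f.
Proof.
move=> hA hT hP X Y f epif K k hk TK.
have [[O hO] _] := hA.
have [Z [g [t hpb]]] := pb_exists f (pc D Y) hA.
have [|w [hw1 hw2]] := pb_lift (a := (0 : Mor (OM D Y) X)) (b := ok D Y) hpb.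
  by rewrite comp0r (ker_comp (ok_kernel D Y)).
have [q hq] := hP _ (TC_T D Y) X Y f (pc D Y) epif.
have [|sg [hs1 hs2]] := pb_lift (a := q) (b := idm (TC D Y)) hpb.
  by rewrite compm1.
have [|ka [hk1 hk2]] := pb_lift (a := k) (b := (0 : Mor K (TC D Y))) hpb.
  by rewrite comp0r (ker_comp hk).
have [|pi hpi] := ker_lift (g := g ⊚ (idm Z - sg ⊚ t)) hk.
  rewrite Defs.compA (proj1 hpb) -Defs.compA compBr compm1 Defs.compA hs2 comp1m.
  by rewrite subrr comp0r.
have TZ : T Z.
  apply: (FT_id hT).
  have -> : idm Z = ka ⊚ pi + sg ⊚ t.
    apply: (pb_uniq hpb).
      rewrite compm1 compDr !Defs.compA hk1 hpi hs1 compBr compm1 Defs.compA hs1.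
      by rewrite subrK.
    by rewrite compm1 compDr !Defs.compA hk2 hs2 comp0l comp1m add0r.
  by apply: FTD => //; apply: FT_through => //; apply: TC_T.
have FTid : forall (V : Obj C), factors_through_T T (0 : Mor V V) by move=> V; apply: FT0.
exists O; split => //.
exists X, Y, f, Z, w, g; split; first by exists t; split.
exists 0, (idm X), (idm Y), (idm (OM D Y)); split; split.
- exists 0; split.
    by rewrite /stable_eq (proj1 hO _ (_ - _)); apply: FT0.
  by apply: FT_to.
- by exists (idm X); rewrite /stable_eq comp1m subrr.
- by exists (idm Y); rewrite /stable_eq comp1m subrr.
- exact: om_id.
- by rewrite /stable_eq comp1m compm1 subrr; apply: FT0.
- by rewrite /stable_eq (proj1 hO _ (_ - _)); apply: FT0.
- by apply: FT_to.
Qed.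

Theorem proposition5p2 (C : preadditive) (T : Obj C -> Prop) (D : loop_data T) :
  abelian C -> additive_closed T ->
  (forall U, T U -> projective U) -> contravariantly_finite T ->
  forall (X Y : Obj C) (f : Mor X Y), epi f ->
  (strong_mono D f <-> exists K (k : Mor K X), is_kernel f k /\ T K).
Proof.
move=> hA hT hP _ X Y f epif; split.
  move=> hs; have [_ [_ [hK _]]] := hA.
  have [K [k hk]] := hK _ _ f.
  by exists K, k; split => //; apply: (forward hA hT hP epif hk hs).
by move=> [K [k [hk TK]]]; apply: (backward D hA hT hP epif hk TK).
Qed.
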